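(* Let $Q$ be a non-empty quasi-order. The quasi-orders $(\mathsf{T_f}(Q),\le_T)$ and $(i^F_{\omega^\omega}(Q),\preceq)$ are equivalent. That is, there are maps $f:\mathsf{T_f}(Q)\to i^F_{\omega^\omega}(Q)$ and $g: i^F_{\omega^\omega}(Q)\to\mathsf{T_f}(Q)$ with the following properties: - both are order-embeddings, i.e. $x\le y\iff f(x)\le f(y)$, and likewise for $g$; - $g(f(\tau))\equiv\tau$ for all $\tau\in\mathsf{T_f}(Q)$; - $f(g(\sigma))\equiv\sigma$ for all $\sigma\in i^F_{\omega^\omega}(Q)$. Here $a\equiv b$ means $a\le b$ and $b\le a$.
   Context: A quasi-order is a set with a reflexive, transitive relation. Trees: $\mathsf{T_f}(Q)$ is the smallest class containing the leaf $\cdot q$ for each $q\in Q$, and containing $\cdot(\tau_0,\dots,\tau_{k-1})$ (an unlabelled root whose children are the $\tau_i$) for every finite set $\{\tau_0,\dots,\tau_{k-1}\}\subseteq\mathsf{T_f}(Q)$ with $k\ge1$. Its order $\le_T$ is defined recursively: - $\cdot x\le_T\cdot y$ iff $x\le_Q y$; - $\cdot x\le_T\cdot(\tau_j)_{j<l}$ iff $\cdot x\le_T\tau_j$ for some $j$; - $\cdot(\sigma_i)_{i<k}\le_T\cdot(\tau_j)_{j<l}$ iff every $\sigma_i$ is $\le_T$ some $\tau_j$; - a non-leaf tree is never $\le_T$ a leaf. Sequences: a transfinite sequence over $Q$ of length $\alpha$ (with $\alpha\neq0$ an ordinal) is a function $\sigma:\alpha\to Q$, and $|\sigma|=\alpha$.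 Define $\sigma\preceq\tau$ if there is a strictly increasing $f:|\sigma|\to|\tau|$ with $\sigma(i)\le_Q\tau(f(i))$ for all $i$. Finite range means the sequence takes finitely many values. A proper tail of $\sigma$ is $i\mapsto\sigma(\delta+i)$ for some $0<\delta<|\sigma|$. The sequence $\sigma$ is indecomposable if it embeds into each of its proper tails. $i^F_{\omega^\omega}(Q)$ is the set of indecomposable finite-range sequences over $Q$ of length $<\omega^\omega$, ordered by $\preceq$. *)

(* Defs.v *)
From mathcomp Require Import all_boot.
From Stdlib Require List.

Set Implicit Arguments.
Unset Strict Implicit.
Unset Printing Implicit Defensive.

(* Ordinals below omega^omega, in Cantor normal form:                  *)
(*   omega^e1 + omega^e2 + ... + omega^ek  with e1 >= e2 >= ... >= ek  *)
(* represented by the non-increasing list [:: e1; ...; ek].            *)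

Definition cnf_ok (a : seq nat) : bool := sorted (fun x y => y <= x) a.

Definition ord := {a : seq nat | cnf_ok a}.

Definition ozero : ord := exist _ [::] isT.

(* strict ordinal order = lexicographic order on CNF lists *)
Fixpoint rlt (a b : seq nat) : bool :=
  match a, b with
  | _, [::] => false
  | [::], _ :: _ => true
  | x :: a', y :: b' => (x < y) || ((x == y) && rlt a' b')
  end.

Definition olt (a b : ord) : bool := rlt (proj1_sig a) (proj1_sig b).

(* ordinal addition d + i in CNF *)
Definition radd (d i : seq nat) : seq nat :=
  if i is e :: _ then [seq x <- d | e <= x] ++ i else d.

(* the unique g with d + g = a, when d <= a: drop the common prefix *)
Fixpoint rsub (a d : seq nat) : seq nat :=
  match a, d with
  | x :: a', y :: d' => if x == y then rsub a' d' else a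
  | _, _ => a
  end.

Lemma radd_ok d i : cnf_ok d -> cnf_ok i -> cnf_ok (radd d i).
Proof.
have tr : transitive (fun x y : nat => y <= x).
  by move=> x y z /= h1 h2; exact: leq_trans h2 h1.
rewrite /cnf_ok /radd; case: i => [|e i] // hd hi.
rewrite !(sorted_pairwise tr) in hd hi *.
rewrite pairwise_cat hi andbT; apply/andP; split; last first.
  by rewrite -(sorted_pairwise tr); apply: sorted_filter => //; rewrite (sorted_pairwise tr).
apply/allrelP => x y; rewrite mem_filter => /andP[ex _].
rewrite inE => /orP[/eqP -> //|yi].
move: hi => /= /andP[/allP /(_ y yi) ye _].
exact: leq_trans ye ex.
Qed.

Lemma rsub_ok a d : cnf_ok a -> cnf_ok (rsub a d).
Proof.
elim: a d => [|x a IH] [|y d] //= h.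
case: ifP => // _; apply: IH; exact: path_sorted h.
Qed.

Definition oadd (d i : ord) : ord :=
  exist _ (radd (proj1_sig d) (proj1_sig i)) (radd_ok (proj2_sig d) (proj2_sig i)).

Definition osub (a d : ord) : ord :=
  exist _ (rsub (proj1_sig a) (proj1_sig d)) (rsub_ok (proj1_sig d) (proj2_sig a)).

(* A sequence is its length together with a map on ordinals; only the  *)
(* values at indices i < length are ever used.                          *)

Record tseq (Q : Type) := TSeq { slen : ord; sval : ord -> Q }.

Section Seqs.
Variables (Q : Type) (R : Q -> Q -> Prop).

Definition sle (s t : tseq Q) : Prop :=
  exists f : ord -> ord,
    (forall i j, olt i j -> olt j (slen s) -> olt (f i) (f j)) /\
    (forall i, olt i (slen s) -> olt (f i) (slen t) /\ R (sval s i) (sval t (f i))).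

Definition tail (s : tseq Q) (delta : ord) : tseq Q :=
  TSeq (osub (slen s) delta) (fun i => sval s (oadd delta i)).

Definition indecomposable (s : tseq Q) : Prop :=
  forall delta, olt ozero delta -> olt delta (slen s) -> sle s (tail s delta).

Definition finite_range (s : tseq Q) : Prop :=
  exists L : list Q, forall i, olt i (slen s) -> List.In (sval s i) L.

Definition in_iF (s : tseq Q) : Prop :=
  slen s <> ozero /\ finite_range s /\ indecomposable s.

Definition iF := {s : tseq Q | in_iF s}.

Definition sleF (s t : iF) : Prop := sle (proj1_sig s) (proj1_sig t).

End Seqs.
Arguments sleF {Q} R s t.
Arguments sle {Q} R s t.

(* Trees T_f(Q): a leaf .q, or an unlabelled root with a non-empty     *)
(* finite family of children (first child t, further children ts).     *)

Inductive tree (Q : Type) : Type :=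
| Leaf (q : Q)
| Node (t : tree Q) (ts : seq (tree Q)).

Inductive leT (Q : Type) (R : Q -> Q -> Prop) : tree Q -> tree Q -> Prop :=
| leT_LL x y : R x y -> leT R (Leaf x) (Leaf y)
| leT_LN x t ts :
    (exists2 u, List.In u (t :: ts) & leT R (Leaf x) u) ->
    leT R (Leaf x) (Node t ts)
| leT_NN s ss t ts :
    (forall v, List.In v (s :: ss) -> exists2 u, List.In u (t :: ts) & leT R v u) ->
    leT R (Node s ss) (Node t ts).

(* Main.v *)
From Pilot Require Import Defs.
From mathcomp Require Import all_boot zify.
From Stdlib Require Import Classical IndefiniteDescription.
Import Pilot.Defs.
Set Implicit Arguments.
Unset Strict Implicit.
Unset Printing Implicit Defensive.

Lemma rlt_irr a : rlt a a = false.
Proof. elim: a => //= x a ->; rewrite ltnn eqxx. by []. Qed.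

Lemma rlt_trans a b c : rlt a b -> rlt b c -> rlt a c.
Proof.
elim: a b c => [|x a IH] [|y b] [|z c] //=.
case/orP=> [h1|/andP[/eqP e1 h1]]; case/orP=> [h2|/andP[/eqP e2 h2]].
- by rewrite (ltn_trans h1 h2).
- by rewrite -e2 h1.
- by rewrite e1 h2.
- by rewrite e1 e2 eqxx (IH _ _ h1 h2) orbT.
Qed.

Lemma rlt_asym a b : rlt a b -> rlt b a = false.
Proof. move=> h; apply/negP=> h'; have := rlt_trans h h'; by rewrite rlt_irr. Qed.

Lemma rlt_total a b : a <> b -> rlt a b \/ rlt b a.
Proof.
elim: a b => [|x a IH] [|y b] //=; try by auto.
move=> ne; case: (ltngtP x y) => [h|h|e]; [by left|by right|].
subst y; rewrite /=; apply: IH => e; by apply: ne; rewrite e.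
Qed.

Lemma rlt_catl p a b : rlt (p ++ a) (p ++ b) = rlt a b.
Proof. elim: p => //= x p ->; by rewrite ltnn eqxx. Qed.

Lemma rlt_head l y b : (if l is z :: _ then z < y else true) -> rlt l (y :: b).
Proof. case: l => //= z l h; by rewrite h. Qed.

Lemma rlt_nil a : rlt a [::] = false.
Proof. by case: a. Qed.

Lemma rlt_nil_l a : rlt [::] a = (a != [::]).
Proof. by case: a. Qed.

Lemma cnf_cons x a : cnf_ok (x :: a) -> cnf_ok a.
Proof. exact: path_sorted. Qed.

Lemma cnf_cons_all x a : cnf_ok (x :: a) -> all (fun y => y <= x) a.
Proof.
move=> h; have tr : transitive (fun x y : nat => y <= x).
  by move=> u v w /= h1 h2; exact: leq_trans h2 h1.
move: h; rewrite /cnf_ok (sorted_pairwise tr) /=; by case/andP.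
Qed.

Lemma cnf_consE x a : cnf_ok (x :: a) = (if a is y :: _ then y <= x else true) && cnf_ok a.
Proof. by case: a => //= y a; rewrite /cnf_ok /=. Qed.

Definition pre y (d : seq nat) := [seq x <- d | y <= x].
Definition post y (d : seq nat) := [seq x <- d | x < y].

Lemma pre_post y d : cnf_ok d -> d = pre y d ++ post y d.
Proof.
elim: d => //= x d IH hd; rewrite /pre /post /=.
case: (leqP y x) => hy /=.
  by rewrite -IH //; apply: cnf_cons hd.
have -> : [seq z <- d | y <= z] = [::].
  apply/eqP; rewrite -(filter_pred0 d) ; apply/eqP; apply: eq_in_filter => z zd.
  move/allP: (cnf_cons_all hd) => /(_ z zd) hz; apply/negbTE; rewrite -ltnNge.
  exact: leq_ltn_trans hz hy.
have -> : [seq z <- d | z < y] = d.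
  apply/all_filterP/allP => z zd.
  move/allP: (cnf_cons_all hd) => /(_ z zd) hz; exact: leq_ltn_trans hz hy.
by [].
Qed.

Lemma cnf_filter P d : cnf_ok d -> cnf_ok (filter P d).
Proof.
move=> h; apply: sorted_filter => //.
by move=> u v w /= h1 h2; exact: leq_trans h2 h1.
Qed.

Lemma raddE d y j : radd d (y :: j) = pre y d ++ y :: j.
Proof. by []. Qed.

Lemma radd0 d : radd d [::] = d. Proof. by []. Qed.

Lemma radd0l i : radd [::] i = i. Proof. by case: i. Qed.

Lemma post_head y d : (if post y d is z :: _ then z < y else true).
Proof.
rewrite /post; case E: [seq x <- d | x < y] => [|z l] //.
have : z \in [seq x <- d | x < y] by rewrite E inE eqxx.
by rewrite mem_filter => /andP[].
Qed.

Lemma radd_mono d i j : cnf_ok d -> rlt i j -> rlt (radd d i) (radd d j).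
Proof.
move=> hd; case: j => [|y j]; first by rewrite rlt_nil.
case: i => [|x i].
  move=> _; rewrite radd0 raddE {1}(pre_post y hd) rlt_catl.
  exact: rlt_head (post_head y d).
move=> h; have {h} : (x < y) || ((x == y) && rlt i j) by [].
case/orP=> [hxy|/andP[/eqP exy hij]].
  rewrite !raddE.
  have hp : cnf_ok (pre x d) by exact: cnf_filter.
  rewrite (pre_post y hp).
  have -> : pre y (pre x d) = pre y d.
    rewrite /pre -filter_predI; apply: eq_filter => z /=.
    case: (leqP y z) => //= hz; by rewrite (leq_trans (ltnW hxy) hz).
  rewrite -catA rlt_catl; apply: rlt_head.
  case E: (post y (pre x d)) => [|z l] /=; first exact: hxy.
  by move: (post_head y (pre x d)); rewrite E.
by subst y; rewrite !raddE rlt_catl /= ltnn eqxx.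
Qed.

Fixpoint suffix_of (r a : seq nat) : bool :=
  (r == a) || (if a is _ :: a' then suffix_of r a' else false).

Lemma rsub_suffix a d : suffix_of (rsub a d) a.
Proof.
elim: a d => [|x a IH] d; case: d => [|y d] /=; try by [|rewrite eqxx].
by case: ifP => _; [rewrite IH orbT | rewrite eqxx].
Qed.

Lemma suffix_head x a r : cnf_ok (x :: a) -> suffix_of r a ->
  (if r is z :: _ then z <= x else true).
Proof.
move=> h; move: (cnf_cons_all h) (cnf_cons h); clear h; elim: a => [|y a IH] /=.
  by move=> _ _; case: r.
case/andP=> hy ha hc /orP[/eqP ->//|]; apply: IH => //; exact: cnf_cons hc.
Qed.

Lemma radd_cons y d r : cnf_ok (y :: d) -> (if r is z :: _ then z <= y else true) ->
  radd (y :: d) r = y :: radd d r.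
Proof. by case: r => // z r _ h; rewrite !raddE /pre /= h. Qed.

Lemma rsub_self a : rsub a a = [::].
Proof. by elim: a => //= x a ->; rewrite eqxx. Qed.

Lemma rsubK a d : cnf_ok a -> cnf_ok d -> rlt a d = false -> radd d (rsub a d) = a.
Proof.
elim: d a => [|y d IH] [|x a] //=.
move=> ha hd; case: (ltngtP x y) => //= hxy.
- move=> _.
  rewrite leqNgt hxy /=.
  have -> : [seq z <- d | x <= z] = [::].
    apply/eqP; rewrite -(filter_pred0 d); apply/eqP; apply: eq_in_filter => z zd.
    move/allP: (cnf_cons_all hd) => /(_ z zd) hz; apply/negbTE; rewrite -ltnNge.
    exact: leq_ltn_trans hz hxy.
  by [].
- subst y => h; rewrite radd_cons //.
    by rewrite IH //; [exact: cnf_cons ha|exact: cnf_cons hd].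
  exact: suffix_head ha (rsub_suffix a d).
Qed.

Lemma raddK d i : cnf_ok d -> cnf_ok i -> rsub (radd d i) d = i.
Proof.
elim: d i => [|y d IH] i hd hi; first by rewrite radd0l; case: (i).
move: hi; case: i => [|z i] hi; first by rewrite radd0 rsub_self.
case: (leqP z y) => hzy.
  rewrite radd_cons //= eqxx -raddE IH //; exact: cnf_cons hd.
rewrite raddE /pre /= leqNgt hzy /=.
have -> : [seq w <- d | z <= w] = [::].
  apply/eqP; rewrite -(filter_pred0 d); apply/eqP; apply: eq_in_filter => w wd.
  move/allP: (cnf_cons_all hd) => /(_ w wd) hw; apply/negbTE; rewrite -ltnNge.
  exact: leq_ltn_trans hw hzy.
by rewrite /= (_ : (z == y) = false) //; apply/negbTE; rewrite neq_ltn hzy orbT.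
Qed.

Lemma radd_ge d i : cnf_ok d -> rlt (radd d i) d = false.
Proof.
move=> hd; case: i => [|z i]; first by rewrite radd0 rlt_irr.
apply: rlt_asym; rewrite -{1}(radd0 d); exact: radd_mono.
Qed.

Lemma radd_le d i j : cnf_ok d -> rlt j i = false -> rlt (radd d j) (radd d i) = false.
Proof.
move=> hd h; case: (altP (i =P j)) => [->|ne]; first by rewrite rlt_irr.
case: (rlt_total (elimN eqP ne)) => h'; last by rewrite h' in h.
exact: rlt_asym (radd_mono hd h').
Qed.

Lemma rsub_mono a b d : cnf_ok a -> cnf_ok b -> cnf_ok d -> rlt a d = false -> rlt b d = false ->
  rlt a b -> rlt (rsub a d) (rsub b d).
Proof.
move=> ha hb hd had hbd hab.
case: (altP (rsub a d =P rsub b d)) => [e|ne].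
  by move: (rsubK ha hd had); rewrite e rsubK // => e'; rewrite e' rlt_irr in hab.
case: (rlt_total (elimN eqP ne)) => // h.
have := radd_mono hd h; rewrite !rsubK // => h'.
by rewrite (rlt_asym h') in hab.
Qed.

Lemma rsub_lt a b d : cnf_ok a -> cnf_ok b -> cnf_ok d -> rlt a d = false ->
  rlt a (radd d b) -> rlt (rsub a d) b.
Proof.
move=> ha hb hd had h.
case: (altP (rsub a d =P b)) => [e|ne].
  by rewrite -e rsubK // rlt_irr in h.
case: (rlt_total (elimN eqP ne)) => // h'.
have := radd_mono hd h'; rewrite rsubK // => h2.
by rewrite (rlt_asym h2) in h.
Qed.

Lemma rlt_le_trans a b c : rlt a b -> rlt c b = false -> rlt a c.
Proof.
move=> h1 h2; case: (altP (c =P b)) => [->//|ne].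
case: (rlt_total (elimN eqP ne)) => h; first by rewrite h in h2.
exact: rlt_trans h1 h.
Qed.

Lemma rle_lt_trans a b c : rlt b a = false -> rlt b c -> rlt a c.
Proof.
move=> h1 h2; case: (altP (a =P b)) => [->//|ne].
case: (rlt_total (elimN eqP ne)) => h; last by rewrite h in h1.
exact: rlt_trans h h2.
Qed.

Lemma rle_trans a b c : rlt b a = false -> rlt c b = false -> rlt c a = false.
Proof.
move=> h1 h2; apply/negbTE/negP => h.
case: (altP (b =P c)) => [e|ne]; first by subst; rewrite h in h1.
case: (rlt_total (elimN eqP ne)) => h'; last by rewrite h' in h2.
by rewrite (rlt_trans h' h) in h1.
Qed.

Lemma rlt_single r e : rlt r [:: e] = (if r is z :: _ then z < e else true).
Proof. case: r => //= z r; by rewrite rlt_nil andbF orbF. Qed.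

Fixpoint cntlead e (l : seq nat) : nat :=
  if l is x :: l' then (if x == e then (cntlead e l').+1 else 0) else 0.

Lemma cntlead_split e l : l = nseq (cntlead e l) e ++ drop (cntlead e l) l.
Proof.
elim: l => //= x l IH; case: (altP (x =P e)) => [e'|ne] //=.
by rewrite -IH e'.
Qed.

Lemma cntlead_cat e n r : (if r is z :: _ then z != e else true) ->
  cntlead e (nseq n e ++ r) = n.
Proof.
move=> h; elim: n => /= [|n ->]; last by rewrite eqxx.
by case: r h => //= z r /negbTE ->.
Qed.

Lemma drop_nseq_cat n e (r : seq nat) : drop n (nseq n e ++ r) = r.
Proof. elim: n => [|n IH] /=; [exact: drop0|exact: IH]. Qed.

Lemma cnf_nseq_cat n e r : cnf_ok r -> rlt r [:: e] -> cnf_ok (nseq n e ++ r).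
Proof.
rewrite rlt_single => hr he; elim: n => //= n.
case: n => [|n] /=; rewrite /cnf_ok /=.
  by case: r hr he => //= z r -> /ltnW ->.
by rewrite leqnn.
Qed.

Lemma cnf_nseq n e : cnf_ok (nseq n e).
Proof. by rewrite -(cats0 (nseq n e)); apply: cnf_nseq_cat. Qed.

Lemma blk_order n n' e r r' : rlt r [:: e] -> n < n' ->
  rlt (nseq n e ++ r) (nseq n' e ++ r').
Proof.
move=> hr hn; rewrite -(subnKC (ltnW hn)) nseqD -catA rlt_catl.
rewrite (_ : n' - n = (n' - n).-1.+1); last by lia.
apply: rlt_head; by rewrite -rlt_single.
Qed.

Lemma blk_order_same n e r r' : rlt (nseq n e ++ r) (nseq n e ++ r') = rlt r r'.
Proof. exact: rlt_catl. Qed.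

Lemma nseq_cat_ge n e r : rlt (nseq n e ++ r) (nseq n e) = false.
Proof. by rewrite -{2}(cats0 (nseq n e)) rlt_catl rlt_nil. Qed.

Lemma blk_lt_succ n e r : rlt r [:: e] -> rlt (nseq n e ++ r) (nseq n.+1 e).
Proof. move=> h; rewrite -(cats0 (nseq n.+1 e)); exact: blk_order. Qed.

Lemma nseq_lt_succ n e : rlt (nseq n e) [:: e.+1].
Proof. by case: n => //= n; rewrite ltnSn. Qed.

Lemma blk_lt_top n e r : rlt r [:: e] -> rlt (nseq n e ++ r) [:: e.+1].
Proof.
move=> h; case: n => [|n] /=; last by rewrite ltnSn.
apply: rlt_trans h _; by rewrite /= ltnSn.
Qed.

Lemma cnf_drop k (l : seq nat) : cnf_ok l -> cnf_ok (drop k l).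
Proof.
elim: l k => [|x l IH] [|k] //= h.
apply: IH; exact: cnf_cons h.
Qed.

Lemma drop_lead_lt l e : cnf_ok l -> rlt l [:: e.+1] ->
  rlt (drop (cntlead e l) l) [:: e].
Proof.
elim: l => [|x l IH] //= hl; rewrite rlt_single => hx.
case: (altP (x =P e)) => [ex|ne] /=.
  rewrite -rlt_single; apply: IH; first exact: cnf_cons hl.
  rewrite rlt_single; clear hx; case: l hl => //= y l; rewrite /cnf_ok /= => /andP[hy _].
  by rewrite -ex ltnS.
move: hx; rewrite rlt_nil andbF orbF => hx.
by rewrite ltn_neqAle ne -ltnS.
Qed.

Lemma top_split l e : cnf_ok l -> rlt l [:: e.+1] ->
  [/\ l = nseq (cntlead e l) e ++ drop (cntlead e l) l,
      cnf_ok (drop (cntlead e l) l) & rlt (drop (cntlead e l) l) [:: e]].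
Proof.
move=> hl hlt; split; [exact: cntlead_split|exact: cnf_drop|exact: drop_lead_lt].
Qed.

Lemma interval_split (i : seq nat) n e : cnf_ok i ->
  rlt i (nseq n e) = false -> rlt i (nseq n.+1 e) ->
  i = nseq n e ++ drop n i /\ cnf_ok (drop n i) /\ rlt (drop n i) [:: e].
Proof.
move=> hi h1 h2.
have hlt : rlt i [:: e.+1] by apply: rlt_trans h2 (nseq_lt_succ _ _).
case: (top_split hi hlt) => E hr hre.
set k := cntlead e i in E hr hre.
have hk : k = n.
  case: (ltngtP k n) => // hkn.
  - have := @blk_order k n e (drop k i) [::] hre hkn; rewrite cats0 -E => h.
    by rewrite h in h1.
  - move: h2; rewrite E.
    rewrite (_ : k = n.+1 + (k - n.+1)); last by lia.
    by rewrite nseqD -catA -{2}(cats0 (nseq n.+1 e)) rlt_catl rlt_nil.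
by rewrite -hk; split.
Qed.

Lemma ord_inj (a b : ord) : proj1_sig a = proj1_sig b -> a = b.
Proof.
case: a b => a ha [b hb] /= e; subst b; congr exist; exact: bool_irrelevance.
Qed.

Definition mko (l : seq nat) : ord := insubd ozero l.

Lemma val_mko l : cnf_ok l -> proj1_sig (mko l) = l.
Proof. move=> h; rewrite /mko /insubd insubT /=; by []. Qed.

Lemma mko_val (a : ord) : mko (proj1_sig a) = a.
Proof. apply: ord_inj; apply: val_mko; exact: (proj2_sig a). Qed.

Lemma ocnf (a : ord) : cnf_ok (proj1_sig a). Proof. exact: proj2_sig a. Qed.

Definition ole (a b : ord) := olt b a = false.

Lemma olt_trans a b c : olt a b -> olt b c -> olt a c.
Proof. exact: rlt_trans. Qed.

Lemma olt_irr a : olt a a = false. Proof. exact: rlt_irr. Qed.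

Lemma ozero_le a : olt a ozero = false. Proof. exact: rlt_nil. Qed.

Lemma ozero_lt a : a <> ozero -> olt ozero a.
Proof.
case: a => [[|x a] h] // ne; exfalso; apply: ne; exact: ord_inj.
Qed.

Lemma olt_total a b : a <> b -> olt a b \/ olt b a.
Proof. move=> ne; apply: rlt_total => e; apply: ne; exact: ord_inj. Qed.

Lemma olt_le_trans a b c : olt a b -> ole b c -> olt a c.
Proof. exact: rlt_le_trans. Qed.
Lemma ole_lt_trans a b c : ole a b -> olt b c -> olt a c.
Proof. exact: rle_lt_trans. Qed.
Lemma ole_trans a b c : ole a b -> ole b c -> ole a c.
Proof. rewrite /ole => h1 h2; exact: rle_trans h1 h2. Qed.
Lemma olt_ole a b : olt a b -> ole a b.
Proof. exact: rlt_asym. Qed.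
Lemma ole_refl a : ole a a. Proof. exact: olt_irr. Qed.
Lemma ole_total a b : ole a b \/ olt b a.
Proof. rewrite /ole; case: (olt b a); by auto. Qed.

Lemma oaddK' d a : ole d a -> oadd d (osub a d) = a.
Proof. move=> h; apply: ord_inj => /=; apply: rsubK => //; exact: ocnf. Qed.
Lemma osubK d i : osub (oadd d i) d = i.
Proof. apply: ord_inj => /=; apply: raddK; exact: ocnf. Qed.
Lemma oadd_mono d i j : olt i j -> olt (oadd d i) (oadd d j).
Proof. apply: radd_mono; exact: ocnf. Qed.
Lemma oadd_ge d i : ole d (oadd d i).
Proof. apply: radd_ge; exact: ocnf. Qed.
Lemma oadd_notlt d i : olt (oadd d i) d = false.
Proof. exact: oadd_ge. Qed.
Lemma oadd_le d i j : ole i j -> ole (oadd d i) (oadd d j).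
Proof. apply: radd_le; exact: ocnf. Qed.
Lemma osub_mono a b d : ole d a -> ole d b -> olt a b -> olt (osub a d) (osub b d).
Proof. apply: rsub_mono; exact: ocnf. Qed.
Lemma osub_lt a b d : ole d a -> olt a (oadd d b) -> olt (osub a d) b.
Proof. apply: rsub_lt; exact: ocnf. Qed.
Lemma oadd0 d : oadd d ozero = d.
Proof. by apply: ord_inj. Qed.
Lemma ozero_ole a : ole ozero a.
Proof. exact: ozero_le. Qed.

Section Gen.
Variables (Q : Type) (R : Q -> Q -> Prop).
Hypothesis R_refl : forall x, R x x.
Hypothesis R_trans : forall x y z, R x y -> R y z -> R x z.

Definition incr (f : ord -> ord) (n : ord) :=
  forall i j, olt i j -> olt j n -> olt (f i) (f j).

Lemma incr_le f n i j : incr f n -> ole i j -> olt j n -> ole (f i) (f j).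
Proof.
move=> hf hij hj; case: (altP (i =P j)) => [->|ne]; first exact: ole_refl.
case: (olt_total (elimN eqP ne)) => h; last by rewrite /ole h in hij.
exact: olt_ole (hf _ _ h hj).
Qed.

Lemma sle_refl s : sle R s s.
Proof. by exists id; split. Qed.

Lemma sle_trans s t u : sle R s t -> sle R t u -> sle R s u.
Proof.
move=> [f [hf1 hf2]] [g [hg1 hg2]]; exists (fun i => g (f i)); split.
  move=> i j hij hj; apply: hg1; first exact: hf1.
  by case: (hf2 _ hj).
move=> i hi; case: (hf2 _ hi) => h1 h2; case: (hg2 _ h1) => h3 h4.
split => //; exact: R_trans h2 h4.
Qed.

Definition sle_in (t : tseq Q) (lo hi : ord) (s : tseq Q) : Prop :=
  exists f : ord -> ord, incr f (slen s) /\
    (forall i, olt i (slen s) -> [/\ ole lo (f i), olt (f i) hi, olt (f i) (slen t)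
                                    & R (sval s i) (sval t (f i))]).

Lemma sle_in_sle t lo hi s : sle_in t lo hi s -> sle R s t.
Proof.
move=> [f [hf1 hf2]]; exists f; split => // i hi'; by case: (hf2 _ hi').
Qed.

Lemma sle_sle_in s t : sle R s t -> sle_in t ozero (slen t) s.
Proof.
move=> [f [hf1 hf2]]; exists f; split => // i hi; case: (hf2 _ hi) => h1 h2.
split => //; exact: ozero_ole.
Qed.

Lemma sle_in_comp s s' t lo hi : sle R s s' -> sle_in t lo hi s' -> sle_in t lo hi s.
Proof.
move=> [f [hf1 hf2]] [g [hg1 hg2]]; exists (fun i => g (f i)); split.
  move=> i j hij hj; apply: hg1; first exact: hf1.
  by case: (hf2 _ hj).
move=> i hi0; case: (hf2 _ hi0) => h1 h2; case: (hg2 _ h1) => h3 h4 h5 h6.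
split => //; exact: R_trans h2 h6.
Qed.

Lemma sle_in_widen t lo hi lo' hi' s : ole lo' lo -> ole hi hi' ->
  sle_in t lo hi s -> sle_in t lo' hi' s.
Proof.
move=> h1 h2 [f [hf1 hf2]]; exists f; split => // i hi0.
case: (hf2 _ hi0) => a b c d; split => //.
  exact: ole_trans h1 a.
exact: olt_le_trans b h2.
Qed.

Lemma sle_in_empty t lo hi s : slen s = ozero -> sle_in t lo hi s.
Proof.
move=> e; exists id; split; first by move=> i j _; rewrite e ozero_le.
by move=> i; rewrite e ozero_le.
Qed.

Lemma sle_in_tail t d up s : sle_in t d up s -> sle R s (tail t d).
Proof.
move=> [f [hf1 hf2]]; exists (fun i => osub (f i) d); split.
  move=> i j hij hj; have hi : olt i (slen s) by exact: olt_trans hij hj.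
  case: (hf2 _ hi) => a1 _ _ _; case: (hf2 _ hj) => b1 _ _ _.
  apply: osub_mono => //; exact: hf1.
move=> i hi; case: (hf2 _ hi) => a1 a2 a3 a4; split => /=.
  apply: osub_mono => //; apply: olt_ole; exact: ole_lt_trans a1 a3.
by rewrite oaddK'.
Qed.

Lemma tail_sle t d : ole d (slen t) -> sle R (tail t d) t.
Proof.
move=> hd; exists (fun i => oadd d i); split.
  move=> i j hij _; exact: oadd_mono.
move=> i hi; split => //; rewrite -(oaddK' hd); exact: oadd_mono.
Qed.

Definition indec (s : tseq Q) := indecomposable R s.

Lemma sle_in_split t lo mid up s : indec s -> sle_in t lo up s ->
  sle_in t lo mid s \/ sle_in t mid up s.
Proof.
move=> hs [f [hf1 hf2]].
case: (classic (forall i, olt i (slen s) -> olt (f i) mid)) => hall.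
  left; exists f; split => // i hi; case: (hf2 _ hi) => a b c d; split => //; exact: hall.
right; move: hall => /not_all_ex_not [d hd].
have [hdl hdm] : olt d (slen s) /\ ole mid (f d).
  case: (classic (olt d (slen s))) => h; last by exfalso; apply: hd => /h.
  split => //; rewrite /ole; apply/negbTE/negP => h'; by apply: hd.
case: (altP (d =P ozero)) => [ed|nd].
  exists f; split => // i hi; case: (hf2 _ hi) => a b c e; split => //.
  apply: ole_trans hdm _; apply: incr_le hf1 _ hi; rewrite ed; exact: ozero_ole.
have hdt : sle_in t mid up (tail s d).
  exists (fun j => f (oadd d j)); split.
    move=> i j hij hj; apply: hf1; first exact: oadd_mono.
    by rewrite -(oaddK' (olt_ole hdl)); exact: oadd_mono.
  move=> j hj.
  have hj' : olt (oadd d j) (slen s).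
    by rewrite -(oaddK' (olt_ole hdl)); exact: oadd_mono.
  case: (hf2 _ hj') => a b c e; split => //.
  apply: ole_trans hdm _; apply: incr_le hf1 _ hj'; exact: oadd_ge.
apply: sle_in_comp hdt; apply: hs => //; apply: ozero_lt => e; apply: (elimN eqP nd) => //.
Qed.

Definition tcat (x y : tseq Q) : tseq Q :=
  TSeq (oadd (slen x) (slen y))
       (fun i => if olt i (slen x) then sval x i else sval y (osub i (slen x))).

Lemma cat_in t lo mid up x y : ole lo mid -> ole mid up -> sle_in t lo mid x -> sle_in t mid up y ->
  sle_in t lo up (tcat x y).
Proof.
move=> hlm hmu [f [hf1 hf2]] [g [hg1 hg2]].
exists (fun i => if olt i (slen x) then f i else g (osub i (slen x))); split.
  move=> i j hij hj /=.
  case: (boolP (olt j (slen x))) => hjx.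
    have hix : olt i (slen x) by exact: olt_trans hij hjx.
    by rewrite hix; apply: hf1.
  have hjy : olt (osub j (slen x)) (slen y) by apply: osub_lt => //; exact/negbTE.
  case: (boolP (olt i (slen x))) => hix.
    case: (hf2 _ hix) => _ a _ _; case: (hg2 _ hjy) => b _ _ _.
    exact: olt_le_trans a b.
  apply: hg1 => //; apply: osub_mono => //; exact/negbTE.
move=> i hi /=; case: (boolP (olt i (slen x))) => hix.
  case: (hf2 _ hix) => a b c d; split => //; exact: olt_le_trans b hmu.
have hiy : olt (osub i (slen x)) (slen y) by apply: osub_lt => //; exact/negbTE.
case: (hg2 _ hiy) => a b c d; split => //.
exact: ole_trans hlm a.
Qed.


Lemma tcat_lenl x y : ole (slen x) (slen (tcat x y)).
Proof. exact: oadd_ge. Qed.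

Lemma sle_cat_l s x y : sle R s x -> sle_in (tcat x y) ozero (slen x) s.
Proof.
move=> [f [hf1 hf2]]; exists f; split => // i hi; case: (hf2 _ hi) => a b.
split => //=; [exact: ozero_ole| exact: olt_le_trans a (tcat_lenl x y)|by rewrite a].
Qed.

Lemma sle_cat_r s x y : sle R s y -> sle_in (tcat x y) (slen x) (slen (tcat x y)) s.
Proof.
move=> [f [hf1 hf2]]; exists (fun i => oadd (slen x) (f i)); split.
  move=> i j hij hj; apply: oadd_mono; exact: hf1.
move=> i hi; case: (hf2 _ hi) => a b.
have hlt : olt (oadd (slen x) (f i)) (slen (tcat x y)) by exact: oadd_mono.
split => //=; first exact: oadd_ge.
by rewrite oadd_notlt osubK.
Qed.

Lemma cat_in_l lo s x y : sle_in (tcat x y) lo (slen x) s -> sle R s x.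
Proof.
move=> [f [hf1 hf2]]; exists f; split => // i hi; case: (hf2 _ hi) => a b c d.
by split => //; move: d => /=; rewrite b.
Qed.

Lemma cat_in_r up s x y : sle_in (tcat x y) (slen x) up s -> sle R s y.
Proof.
move=> [f [hf1 hf2]]; exists (fun i => osub (f i) (slen x)); split.
  move=> i j hij hj; have hi : olt i (slen s) by exact: olt_trans hij hj.
  case: (hf2 _ hi) => a1 _ _ _; case: (hf2 _ hj) => b1 _ _ _.
  apply: osub_mono => //; exact: hf1.
move=> i hi; case: (hf2 _ hi) => a b c d; split; first exact: osub_lt.
by move: d => /=; rewrite a.
Qed.

Lemma cat_L1 s x y : indec s -> sle R s (tcat x y) -> sle R s x \/ sle R s y.
Proof.
move=> hs /sle_sle_in h.
case: (sle_in_split (slen x) hs h) => h'; [left; exact: cat_in_l h'|right; exact: cat_in_r h'].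
Qed.

Lemma cat_mono x x' y y' : sle R x x' -> sle R y y' -> sle R (tcat x y) (tcat x' y').
Proof.
move=> hx hy; apply: (@sle_in_sle _ ozero (slen (tcat x' y'))).
apply: (cat_in (mid := slen x')); first exact: ozero_ole.
  exact: tcat_lenl.
  exact: sle_cat_l.
exact: sle_cat_r.
Qed.

Lemma sle_pad s x y :
  (forall i, olt i (slen s) ->
     (olt i (slen x) -> R (sval s i) (sval x i)) /\
     (~~ olt i (slen x) -> olt i (slen y) /\ R (sval s i) (sval y i))) ->
  sle R s (tcat x y).
Proof.
move=> h; exists (fun i => if olt i (slen x) then i else oadd (slen x) i); split.
  move=> i j hij hj.
  case: (boolP (olt j (slen x))) => hjx.
    by rewrite (olt_trans hij hjx).
  case: (boolP (olt i (slen x))) => hix.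
    exact: olt_le_trans hix (oadd_ge _ _).
  exact: oadd_mono.
move=> i hi; case: (h _ hi) => h1 h2.
case: (boolP (olt i (slen x))) => hix /=.
  by split; [exact: olt_le_trans hix (tcat_lenl x y)|rewrite hix; exact: h1].
case: (h2 hix) => a b; split; first exact: oadd_mono.
by rewrite oadd_notlt osubK.
Qed.

Lemma split_le x d : ole d (slen x) -> sle R x (tcat (TSeq d (sval x)) (tail x d)).
Proof.
move=> hd; exists id; split => // i hi /=.
rewrite oaddK' //; split => //.
case: (boolP (olt i d)) => // hid.
by rewrite oaddK' //; exact/negbTE.
Qed.

Lemma prefix_le x d : ole d (slen x) -> sle R (TSeq d (sval x)) x.
Proof.
move=> hd; exists id; split => // i hi /=; split => //; exact: olt_le_trans hi hd.
Qed.

End Gen.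

Definition blk e n : ord := mko (nseq n e).

Lemma val_blk e n : proj1_sig (blk e n) = nseq n e.
Proof. apply: val_mko; exact: cnf_nseq. Qed.

Lemma blk_lt e a b : olt (blk e a) (blk e b) = (a < b).
Proof.
rewrite /olt !val_blk; case: (ltnP a b) => h.
  by rewrite -(cats0 (nseq a e)) -(cats0 (nseq b e)) blk_order.
by rewrite -(subnKC h) nseqD -{2}(cats0 (nseq b e)) rlt_catl rlt_nil.
Qed.

Lemma blk_le e a b : ole (blk e a) (blk e b) <-> a <= b.
Proof. rewrite /ole blk_lt ltnNge; case: (a <= b); by split. Qed.

Lemma blk0 e : blk e 0 = ozero.
Proof. by apply: ord_inj; rewrite val_blk. Qed.

Lemma val_single e : proj1_sig (mko [:: e]) = [:: e].
Proof. exact: val_mko. Qed.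

Definition idx e n (r : ord) : ord := mko (nseq n e ++ proj1_sig r).

Lemma val_idx e n r : olt r (mko [:: e]) -> proj1_sig (idx e n r) = nseq n e ++ proj1_sig r.
Proof.
rewrite /olt val_single => h; apply: val_mko; apply: cnf_nseq_cat => //; exact: ocnf.
Qed.

Lemma idx_ge e n r : olt r (mko [:: e]) -> ole (blk e n) (idx e n r).
Proof. move=> h; rewrite /ole /olt val_idx // val_blk; exact: nseq_cat_ge. Qed.

Lemma idx_lt e n r : olt r (mko [:: e]) -> olt (idx e n r) (blk e n.+1).
Proof. move=> h; rewrite /olt val_idx // val_blk; apply: blk_lt_succ; by move: h; rewrite /olt val_single. Qed.

Lemma idx_mono e n r r' : olt r (mko [:: e]) -> olt r' (mko [:: e]) -> olt r r' ->
  olt (idx e n r) (idx e n r').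
Proof. move=> h h' hr; by rewrite /olt !val_idx // rlt_catl. Qed.

Lemma blk_top (Q : Type) e n (X : tseq Q) : proj1_sig (slen X) = [:: e.+1] -> olt (blk e n) (slen X).
Proof. move=> hX; rewrite /olt hX val_blk; exact: nseq_lt_succ. Qed.

Section Blocks.
Variables (Q : Type) (R : Q -> Q -> Prop).
Hypothesis R_refl : forall x, R x x.
Hypothesis R_trans : forall x y z, R x y -> R y z -> R x z.

Definition block (X : tseq Q) e n : tseq Q :=
  TSeq (mko [:: e]) (fun r => sval X (idx e n r)).

Lemma idx_topQ e n r (X : tseq Q) : proj1_sig (slen X) = [:: e.+1] ->
  olt r (mko [:: e]) -> olt (idx e n r) (slen X).
Proof.
move=> hX h; rewrite /olt hX val_idx //; apply: blk_lt_top; by move: h; rewrite /olt val_single.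
Qed.

Lemma block_in X e n s : proj1_sig (slen X) = [:: e.+1] ->
  sle R s (block X e n) -> sle_in R X (blk e n) (blk e n.+1) s.
Proof.
move=> hX [f [hf1 hf2]]; exists (fun i => idx e n (f i)); split.
  move=> i j hij hj; apply: idx_mono; [|by case: (hf2 _ hj)|exact: hf1].
  by case: (hf2 _ (olt_trans hij hj)).
move=> i hi; case: (hf2 _ hi) => a b; split => //.
- exact: idx_ge.
- exact: idx_lt.
- exact: idx_topQ.
Qed.

Lemma in_block X e n s : proj1_sig (slen X) = [:: e.+1] ->
  sle_in R X (blk e n) (blk e n.+1) s -> sle R s (block X e n).
Proof.
move=> hX [f [hf1 hf2]].
have dec : forall i, olt i (slen s) ->
   proj1_sig (f i) = nseq n e ++ drop n (proj1_sig (f i)) /\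
   cnf_ok (drop n (proj1_sig (f i))) /\ rlt (drop n (proj1_sig (f i))) [:: e].
  move=> i hi; case: (hf2 _ hi) => a b _ _.
  apply: interval_split; [exact: ocnf| by move: a; rewrite /ole /olt val_blk|
     by move: b; rewrite /olt val_blk].
exists (fun i => mko (drop n (proj1_sig (f i)))); split.
  move=> i j hij hj; have hi := olt_trans hij hj.
  case: (dec _ hi) => Ei [ci ri]; case: (dec _ hj) => Ej [cj rj].
  move: (hf1 _ _ hij hj); rewrite /olt {1}Ei {1}Ej rlt_catl => h.
  by rewrite !val_mko.
move=> i hi; case: (dec _ hi) => Ei [ci ri]; case: (hf2 _ hi) => _ _ _ d.
have E : idx e n (mko (drop n (proj1_sig (f i)))) = f i.
  apply: ord_inj; rewrite /idx val_mko val_mko //; last exact: cnf_nseq_cat.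
split => /=; last by rewrite E.
by rewrite /olt val_mko // val_single.
Qed.

Lemma block_le X e n : proj1_sig (slen X) = [:: e.+1] -> sle R (block X e n) X.
Proof. move=> hX; have h := block_in hX (sle_refl R_refl (block X e n)). exact: sle_in_sle h. Qed.

Lemma blk_upper e h : cnf_ok h -> rlt h [:: e.+1] ->
  olt (mko h) (blk e (cntlead e h).+1).
Proof.
move=> hc hl; case: (top_split hc hl) => E c r.
rewrite /olt val_mko // val_blk {1}E; exact: blk_lt_succ.
Qed.

Lemma omega_sum (X Y : tseq Q) e e' : proj1_sig (slen X) = [:: e.+1] -> proj1_sig (slen Y) = [:: e'.+1] ->
  (forall n a, exists b, sle_in R Y (blk e' a) (blk e' b) (block X e n)) ->
  forall a, sle_in R Y (blk e' a) (slen Y) X.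
Proof.
move=> hX hY H a0.
have H1 : forall n a, {b | sle_in R Y (blk e' a) (blk e' b) (block X e n)}.
  move=> n a; apply: constructive_indefinite_description; exact: H.
pose B n a := proj1_sig (H1 n a).
pose A := fix A n := if n is n'.+1 then B n' (A n') else a0.
have HA : forall n, sle_in R Y (blk e' (A n)) (blk e' (A n.+1)) (block X e n).
  move=> n; exact: (proj2_sig (H1 n (A n))).
have H2 : forall n, {f : ord -> ord | incr f (slen (block X e n)) /\
    (forall i, olt i (slen (block X e n)) -> [/\ ole (blk e' (A n)) (f i), olt (f i) (blk e' (A n.+1)),
        olt (f i) (slen Y) & R (sval (block X e n) i) (sval Y (f i))])}.
  move=> n; apply: constructive_indefinite_description; exact: HA.
pose Phi n := proj1_sig (H2 n).
have hPhi n : incr (Phi n) (slen (block X e n)) /\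
    (forall i, olt i (slen (block X e n)) -> [/\ ole (blk e' (A n)) (Phi n i), olt (Phi n i) (blk e' (A n.+1)),
        olt (Phi n i) (slen Y) & R (sval (block X e n) i) (sval Y (Phi n i))]).
  exact: (proj2_sig (H2 n)).
have z_in : forall n, olt ozero (slen (block X e n)).
  by move=> n; rewrite /olt val_single.
have Ainc : forall n, A n < A n.+1.
  move=> n; case: (hPhi n) => _ h; case: (h _ (z_in n)) => a b _ _.
  rewrite -(blk_lt e'); exact: ole_lt_trans a b.
have Amono : forall n m, n <= m -> A n <= A m.
  move=> n m /subnKC <-; elim: (m - n) => [|k IH]; first by rewrite addn0.
  rewrite addnS; apply: leq_trans IH (ltnW (Ainc _)).
pose k (i : ord) := cntlead e (proj1_sig i).
pose r (i : ord) := mko (drop (k i) (proj1_sig i)).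
have dec : forall i, olt i (slen X) ->
   [/\ proj1_sig i = nseq (k i) e ++ proj1_sig (r i), olt (r i) (mko [:: e]) & idx e (k i) (r i) = i].
  move=> i hi; have := top_split (ocnf i) (_ : rlt _ [:: e.+1]).
  rewrite -hX => /(_ hi) [E c l].
  have vr : proj1_sig (r i) = drop (k i) (proj1_sig i) by rewrite val_mko.
  split.
  - by rewrite vr.
  - by rewrite /olt vr val_single.
  - apply: ord_inj; rewrite val_idx; first by rewrite vr.
    by rewrite /olt vr val_single.
exists (fun i => Phi (k i) (r i)); split.
  move=> i j hij hj; have hi := olt_trans hij hj.
  case: (dec _ hi) => Ei ri _; case: (dec _ hj) => Ej rj _.
  case: (ltngtP (k i) (k j)) => hk.
  - case: (hPhi (k i)) => _ h1; case: (h1 _ ri) => _ b _ _.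
    case: (hPhi (k j)) => _ h2; case: (h2 _ rj) => a' _ _ _.
    apply: (olt_le_trans b); apply: ole_trans a'; apply/blk_le; exact: Amono.
  - exfalso; move: hij; rewrite /olt Ei Ej.
    move: rj; rewrite /olt val_single => rj.
    by rewrite (rlt_asym (blk_order (proj1_sig (r i)) rj hk)).
  - case: (hPhi (k i)) => h1 _; rewrite -hk in rj *; apply: h1 => //.
    by move: hij; rewrite /olt Ei Ej hk rlt_catl.
move=> i hi; case: (dec _ hi) => Ei ri Id.
case: (hPhi (k i)) => _ h1; case: (h1 _ ri) => a b c d; split => //.
- apply: ole_trans a; apply/blk_le; apply: (@leq_trans (A 0)); first by [].
  exact: Amono.
- by move: d; rewrite /= Id.
Qed.

Lemma tail_blk_len (X : tseq Q) e N : proj1_sig (slen X) = [:: e.+1] ->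
  proj1_sig (slen (tail X (blk e N))) = [:: e.+1].
Proof.
move=> hX; rewrite /= hX val_blk; case: N => //= N.
by rewrite (_ : (e.+1 == e) = false) //; apply/negbTE; rewrite neq_ltn ltnSn orbT.
Qed.

Lemma tail_block (X : tseq Q) e N n : proj1_sig (slen X) = [:: e.+1] ->
  sle R (block (tail X (blk e N)) e n) (block X e (N + n)).
Proof.
move=> hX; exists id; split => // i hi; split => //=.
have -> : oadd (blk e N) (idx e n i) = idx e (N + n) i.
  apply: ord_inj; rewrite /= val_blk !val_idx // nseqD -catA.
  have hi' : rlt (proj1_sig i) [:: e] by move: hi; rewrite /olt val_single.
  clear hi; case: n => [|n] /=.
    case: (proj1_sig i) hi' => [|z l] hz; first by rewrite radd0 cats0.
    rewrite raddE /pre.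
    have zlt : z < e by move: hz; rewrite rlt_single.
    rewrite (_ : [seq x <- nseq N e | z <= x] = nseq N e) //.
    apply/all_filterP/allP => x; rewrite mem_nseq => /andP[_ /eqP ->]; exact: ltnW.
  rewrite (_ : [seq x <- nseq N e | e <= x] = nseq N e) //.
  apply/all_filterP/allP => x; rewrite mem_nseq => /andP[_ /eqP ->]; exact: leqnn.
exact: R_refl.
Qed.

Lemma blocks_L1 (Y : tseq Q) e s : indec R s -> olt ozero (slen s) ->
  forall N, sle_in R Y (blk e 0) (blk e N) s -> exists2 n, n < N & sle_in R Y (blk e n) (blk e n.+1) s.
Proof.
move=> hs hne; elim=> [|N IH] h.
  case: h => f [_ hf]; case: (hf _ hne) => a b _ _.
  by move: (ole_lt_trans a b); rewrite olt_irr.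
case: (sle_in_split R_trans (blk e N) hs h) => h'.
  by case: (IH h') => n hn hn'; exists n => //; exact: ltnW.
by exists N.
Qed.

Lemma sle_in_compose (X Y : tseq Q) lo hi s : sle_in R X lo hi s -> olt hi (slen X) -> sle R X Y ->
  exists h, olt h (slen Y) /\ sle_in R Y ozero h s.
Proof.
move=> [g [hg1 hg2]] hhi [f [hf1 hf2]]; exists (f hi); split; first by case: (hf2 _ hhi).
exists (fun i => f (g i)); split.
  move=> i j hij hj; apply: hf1; first exact: hg1.
  by case: (hg2 _ hj) => _ _ c _.
move=> i hi0; case: (hg2 _ hi0) => a b c d; case: (hf2 _ c) => c' d'; split => //.
- exact: ozero_ole.
- exact: hf1.
- exact: R_trans d d'.
Qed.

End Blocks.

Section Trees.
Variables (Q : Type) (R : Q -> Q -> Prop).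
Hypothesis R_refl : forall x, R x x.
Hypothesis R_trans : forall x y z, R x y -> R y z -> R x z.

Fixpoint tree_ind2 (P : tree Q -> Prop) (HL : forall q, P (Leaf q))
  (HN : forall t0 ts, P t0 -> (forall u, List.In u ts -> P u) -> P (Node t0 ts))
  (t : tree Q) : P t :=
  match t with
  | Leaf q => HL q
  | Node t0 ts => HN t0 ts (tree_ind2 HL HN t0)
      ((fix go (l : seq (tree Q)) : forall u, List.In u l -> P u :=
          match l with
          | [::] => fun u (h : List.In u [::]) => False_ind _ h
          | x :: l' => fun u h => match h with
                        | or_introl e => eq_ind x P (tree_ind2 HL HN x) u e
                        | or_intror h' => go l' u h'
                        end
          end) ts)
  end.

Fixpoint ht (t : tree Q) : nat :=
  match t with
  | Leaf _ => 0
  | Node t0 ts => (foldr maxn 0 (ht t0 :: map ht ts)).+1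
  end.

Fixpoint Fv (t : tree Q) : seq nat -> Q :=
  match t with
  | Leaf q => fun _ => q
  | Node t0 ts =>
    let hs := ht t0 :: map ht ts in
    let fs := Fv t0 :: map Fv ts in
    let H := foldr maxn 0 hs in
    let m := size hs in
    let jm := index H hs in
    fun i => let k := (cntlead H i) %% m in let r := drop (cntlead H i) i in
      if rlt r [:: nth 0 hs k] then nth (Fv t0) fs k r else nth (Fv t0) fs jm r
  end.

Arguments Fv : simpl never.

Fixpoint leaves (t : tree Q) : list Q :=
  match t with
  | Leaf q => [:: q]
  | Node t0 ts => List.app (leaves t0) (List.concat (List.map leaves ts))
  end.

Definition ftseq (t : tree Q) : tseq Q := TSeq (mko [:: ht t]) (fun i => Fv t (proj1_sig i)).

Lemma slen_f t : proj1_sig (slen (ftseq t)) = [:: ht t].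
Proof. exact: val_single. Qed.

Definition hmax (cs : seq (tree Q)) := foldr maxn 0 (map ht cs).

Lemma ht_node t0 ts : ht (Node t0 ts) = (hmax (t0 :: ts)).+1.
Proof. by []. Qed.

Lemma In_nth (x0 c : tree Q) cs : List.In c cs -> exists2 j, j < size cs & nth x0 cs j = c.
Proof.
elim: cs => //= x cs IH [->|h]; first by exists 0.
case: (IH h) => j hj e; by exists j.+1.
Qed.

Lemma nth_In (x0 : tree Q) cs j : j < size cs -> List.In (nth x0 cs j) cs.
Proof.
elim: cs j => //= x cs IH [|j] h; [by left|right; exact: IH].
Qed.

Lemma hmax_ge cs c : List.In c cs -> ht c <= hmax cs.
Proof.
elim: cs => //= x cs IH [->|h]; first exact: leq_maxl.
exact: leq_trans (IH h) (leq_maxr _ _).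
Qed.

Lemma foldr_max_in (l : seq nat) x : foldr maxn 0 (x :: l) \in x :: l.
Proof.
elim: l x => [|y l IH] x /=; first by rewrite maxn0 inE eqxx.
move: (IH y) => /=; set z := foldr maxn 0 l => hz.
case: (leqP x (maxn y z)) => h; first by rewrite inE hz orbT.
by rewrite inE eqxx.
Qed.

Lemma hmax_in c0 cs : (c0 :: cs) = c0 :: cs ->
  let j := index (hmax (c0 :: cs)) (map ht (c0 :: cs)) in
  j < size (c0 :: cs) /\ ht (nth c0 (c0 :: cs) j) = hmax (c0 :: cs).
Proof.
move=> _ j.
have hin : hmax (c0 :: cs) \in map ht (c0 :: cs).
  rewrite /hmax; apply: foldr_max_in.
split; first by rewrite /j -(size_map ht) index_mem.
by rewrite -(nth_map c0 0) ?nth_index // /j -(size_map ht) index_mem.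
Qed.

Lemma FvE t0 ts i : Fv (Node t0 ts) i =
  let cs := t0 :: ts in let H := hmax cs in let k := cntlead H i %% size cs in
  let r := drop (cntlead H i) i in
  if rlt r [:: ht (nth t0 cs k)] then Fv (nth t0 cs k) r
  else Fv (nth t0 cs (index H (map ht cs))) r.
Proof.
have -> : Fv (Node t0 ts) i =
   (let hs := map ht (t0 :: ts) in let fs := map Fv (t0 :: ts) in let H := foldr maxn 0 hs in
    let m := size hs in let jm := index H hs in
    let k := cntlead H i %% m in let r := drop (cntlead H i) i in
    if rlt r [:: nth 0 hs k] then nth (Fv t0) fs k r else nth (Fv t0) fs jm r) by [].
cbv zeta; rewrite -/(hmax (t0 :: ts)) size_map.
have hk : cntlead (hmax (t0 :: ts)) i %% size (t0 :: ts) < size (t0 :: ts) by rewrite ltn_mod.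
have hj : index (hmax (t0 :: ts)) (map ht (t0 :: ts)) < size (t0 :: ts).
  by case: (hmax_in (erefl (t0 :: ts))).
by rewrite !(nth_map t0).
Qed.

Section NodeFacts.
Variables (t0 : tree Q) (ts : seq (tree Q)).
Let cs := t0 :: ts.
Let H := hmax cs.
Let m := size cs.
Let jm := index H (map ht cs).
Let cmax := nth t0 cs jm.
Let X := ftseq (Node t0 ts).

Lemma m_pos : 0 < m. Proof. by []. Qed.

Lemma cmax_ht : ht cmax = H.
Proof. by case: (hmax_in (erefl cs)). Qed.

Lemma jm_lt : jm < m.
Proof. by case: (hmax_in (erefl cs)). Qed.

Lemma X_len : proj1_sig (slen X) = [:: H.+1].
Proof. exact: slen_f. Qed.

Lemma Fv_node n r : rlt r [:: H] ->
  Fv (Node t0 ts) (nseq n H ++ r) =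
  (if rlt r [:: ht (nth t0 cs (n %% m))] then Fv (nth t0 cs (n %% m)) r else Fv cmax r).
Proof.
move=> hr; rewrite FvE; cbv zeta; rewrite -/cs -/H cntlead_cat; last first.
  by case: r hr => // z r; rewrite rlt_single => h; rewrite neq_ltn h.
by rewrite drop_nseq_cat.
Qed.

Lemma block_X_cat n : sle R (block X H n) (tcat (ftseq (nth t0 cs (n %% m))) (ftseq cmax)).
Proof.
apply: sle_pad => r hr; have hr' : rlt (proj1_sig r) [:: H] by move: hr; rewrite /olt val_single.
rewrite /= val_idx //= Fv_node //; split.
  by rewrite /olt val_single => ->.
rewrite /olt val_single => /negbTE ->; split => //.
by rewrite val_single cmax_ht.
Qed.

Lemma child_block n : sle R (ftseq (nth t0 cs (n %% m))) (block X H n).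
Proof.
exists id; split => // r hr.
have hc : ht (nth t0 cs (n %% m)) <= H.
  apply: hmax_ge; apply: nth_In; by rewrite ltn_mod.
have hr' : rlt (proj1_sig r) [:: H].
  move: hr; rewrite /olt !val_single !rlt_single; case: (proj1_sig r) => // z _ h.
  exact: leq_trans h hc.
have hr2 : rlt (proj1_sig r) [:: ht (nth t0 cs (n %% m))] by move: hr; rewrite /olt val_single.
split; first by rewrite /olt val_single.
by rewrite /= val_idx ?Fv_node // ?hr2 //; rewrite /olt val_single.
Qed.

Lemma child_le c : List.In c cs -> sle R (ftseq c) X.
Proof.
case/(In_nth t0) => j hj <-.
apply: (sle_trans R_trans (t := block X H j)); last exact: (block_le R_refl j X_len).
have := child_block j; by rewrite modn_small.
Qed.

Lemma X_fits s c : List.In c cs -> sle R s (ftseq c) ->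
  forall a, sle_in R X (blk H a) (blk H (m * a + m)) s.
Proof.
case/(In_nth t0) => j hj <- hs a.
have e : (m * a + j) %% m = j by rewrite mulnC modnMDl modn_small.
have := child_block (m * a + j); rewrite e => h.
have h2 := block_in X_len (sle_trans R_trans hs h).
apply: sle_in_widen h2; apply/blk_le.
  by apply: leq_trans (leq_addr _ _); rewrite leq_pmull.
lia.
Qed.

Lemma X_shift n a : sle_in R X (blk H (m * a + n)) (blk H (m * a + n).+1) (block X H n).
Proof.
apply: block_in; first exact: X_len.
exists id; split => // r hr; split => //=.
rewrite !val_idx //; first rewrite !Fv_node //; try by move: hr; rewrite /olt val_single.
by rewrite mulnC modnMDl.
Qed.

End NodeFacts.

Lemma f_fin t : forall i, List.In (Fv t i) (leaves t).
Proof.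
elim/tree_ind2: t => [q|t0 ts IH0 IH] i; first by left.
have inall : forall c, List.In c (t0 :: ts) -> forall j, List.In (Fv c j) (leaves (Node t0 ts)).
  move=> c [<-|hc] j; apply/List.in_or_app; first by left; exact: IH0.
  right; apply/List.in_concat; exists (leaves c); split; last exact: IH.
  exact: List.in_map.
rewrite FvE; cbv zeta; case: ifP => _; apply: inall; apply: nth_In.
  by rewrite ltn_mod.
by case: (hmax_in (erefl (t0 :: ts))).
Qed.

Lemma f_indec t : indecomposable R (ftseq t).
Proof.
case: t => [q|t0 ts] d hd0 hd.
  by move: hd0 hd; rewrite /olt val_single rlt_single; case: (proj1_sig d).
set X := ftseq (Node t0 ts).
have hX := X_len t0 ts.
set H := hmax (t0 :: ts) in hX.
set N := (cntlead H (proj1_sig d)).+1.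
have hdN : olt d (blk H N).
  rewrite -(mko_val d); apply: blk_upper; first exact: ocnf.
  by move: hd; rewrite /olt hX.
have Hb : forall n a, exists b, sle_in R X (blk H a) (blk H b) (block X H n).
  move=> n a; exists (size (t0 :: ts) * a + n).+1.
  apply: sle_in_widen (X_shift t0 ts n a); last exact: ole_refl.
  apply/blk_le; by apply: leq_trans (leq_addr _ _); rewrite leq_pmull.
have [f hf] := omega_sum hX hX Hb N. apply: (sle_in_tail (up := slen X)); exists f; split; first by case: hf.
move=> i hi; case: hf => _ /(_ _ hi) [a b c e]; split => //.
exact: ole_trans (olt_ole hdN) a.
Qed.

Lemma f_iF t : in_iF R (ftseq t).
Proof.
split; last split.
- move=> e; have := slen_f t; rewrite e //.
- by exists (leaves t) => i _; exact: f_fin.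
- exact: f_indec.
Qed.

End Trees.

Section Emb.
Variables (Q : Type) (R : Q -> Q -> Prop).
Hypothesis R_refl : forall x, R x x.
Hypothesis R_trans : forall x y z, R x y -> R y z -> R x z.

Notation f := (@ftseq Q).

Lemma sval_f t i : sval (f t) i = Fv t (proj1_sig i).
Proof. by []. Qed.

Lemma val_in_child t0 ts (i : ord) : olt i (slen (f (Node t0 ts))) ->
  exists c, List.In c (t0 :: ts) /\ exists r : ord, olt r (slen (f c)) /\
     Fv (Node t0 ts) (proj1_sig i) = Fv c (proj1_sig r).
Proof.
move=> hi; rewrite FvE; cbv zeta.
set H := hmax (t0 :: ts).
have hi' : rlt (proj1_sig i) [:: H.+1] by move: hi; rewrite /olt X_len.
have hd := drop_lead_lt (ocnf i) hi'.
have hc := cnf_drop (cntlead H (proj1_sig i)) (ocnf i).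
set r := drop _ _ in hd hc *.
case: ifP => h.
  exists (nth t0 (t0 :: ts) (cntlead H (proj1_sig i) %% size (t0 :: ts))); split.
    by apply: nth_In; rewrite ltn_mod.
  exists (mko r); rewrite /olt val_mko // slen_f; split => //.
case: (hmax_in (erefl (t0 :: ts))) => hj hh.
exists (nth t0 (t0 :: ts) (index H (map (@ht Q) (t0 :: ts)))); split; first exact: nth_In.
exists (mko r); rewrite /olt val_mko // slen_f hh; split => //.
Qed.

Lemma leaf_to q y : sle R (f (Leaf q)) (f y) -> leT R (Leaf q) y.
Proof.
elim/tree_ind2: y => [q'|t0 ts IH0 IH] [g [_ hg]].
  have := hg ozero; rewrite /olt slen_f => /(_ isT) [_ h]; exact: leT_LL.
have := hg ozero; rewrite /olt slen_f => /(_ isT) [h1 h2].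
case: (val_in_child h1) => c [hc [r [hr e]]].
apply: leT_LN; exists c => //.
have hs : sle R (f (Leaf q)) (f c).
  exists (fun _ => r); split.
    move=> i j hij hj; exfalso; move: hij hj; rewrite /olt slen_f rlt_single.
    by case: (proj1_sig j) => [|z l]; [rewrite rlt_nil|].
  move=> i _; split => //; move: h2; rewrite !sval_f e //.
case: hc => [ec|hc]; [subst c; exact: IH0 hs|exact: IH hc hs].
Qed.

Lemma leaf_from q y : leT R (Leaf q) y -> sle R (f (Leaf q)) (f y).
Proof.
elim/tree_ind2: y => [q'|t0 ts IH0 IH] h.
  inversion h; subst; exists id; split => // i hi; split => //.
inversion h; subst.
case: H1 => u hu hl.
have hs : sle R (f (Leaf q)) (f u).
  by case: hu => [eu|hu']; [subst u; exact: IH0 hl|exact: IH hu' hl].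
exact: (sle_trans R_trans hs (child_le R_refl R_trans hu)).
Qed.

Lemma node_not_leaf t0 ts q : ~ sle R (f (Node t0 ts)) (f (Leaf q)).
Proof.
move=> [g [hg1 hg2]].
have h1 : olt (mko [:: 0]) (slen (f (Node t0 ts))) by rewrite /olt val_single X_len.
have h0 : olt ozero (mko [:: 0]) by rewrite /olt val_single.
have := hg1 _ _ h0 h1; case: (hg2 _ h1) => a _.
move: a; rewrite /olt slen_f rlt_single; case: (proj1_sig (g (mko [:: 0]))) => // _.
by rewrite rlt_nil.
Qed.

Lemma emb_fwd x y : leT R x y -> sle R (f x) (f y).
Proof.
elim/tree_ind2: x y => [q|t0 ts IH0 IH] y h; first exact: leaf_from.
inversion h; subst; rename t into d0; rename ts0 into ds.
have Hc : forall v, List.In v (t0 :: ts) -> exists2 u, List.In u (d0 :: ds) & sle R (f v) (f u).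
  move=> v hv; case: (H2 v hv) => u hu hvu; exists u => //.
  by case: hv => [ev|hv]; [subst v; exact: IH0 hvu|exact: IH v hv u hvu].
set X := f (Node t0 ts); set Y := f (Node d0 ds).
set H := hmax (t0 :: ts); set H' := hmax (d0 :: ds); set m' := size (d0 :: ds).
have Hb : forall n a, exists b, sle_in R Y (blk H' a) (blk H' b) (block X H n).
  move=> n a.
  have hc1 : List.In (nth t0 (t0 :: ts) (n %% size (t0 :: ts))) (t0 :: ts) by apply: nth_In; rewrite ltn_mod.
  have hc2 : List.In (nth t0 (t0 :: ts) (index H (map (@ht Q) (t0 :: ts)))) (t0 :: ts).
    by apply: nth_In; case: (hmax_in (erefl (t0 :: ts))).
  case: (Hc _ hc1) => u1 hu1 s1; case: (Hc _ hc2) => u2 hu2 s2.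
  have e1 := X_fits R_refl R_trans hu1 s1 a.
  have e2 := X_fits R_refl R_trans hu2 s2 (m' * a + m').
  exists (m' * (m' * a + m') + m').
  apply: (sle_in_comp R_trans (block_X_cat R_refl t0 ts n)).
  apply: (cat_in _ _ e1 e2); apply/blk_le.
    by apply: leq_trans (leq_addr _ _); rewrite leq_pmull.
  by apply: leq_trans (leq_addr _ _); rewrite leq_pmull.
have [g hg] := omega_sum (X_len t0 ts) (X_len d0 ds) Hb 0.
exact: (@sle_in_sle _ _ _ _ _ _ (ex_intro _ g hg)).
Qed.

Lemma emb_bwd x y : sle R (f x) (f y) -> leT R x y.
Proof.
elim/tree_ind2: x y => [q|t0 ts IH0 IH] y h; first exact: leaf_to.
case: y h => [q h|d0 ds h]; first by case: (node_not_leaf h).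
apply: leT_NN => v hv.
have hv' : forall u, List.In u (d0 :: ds) -> sle R (f v) (f u) -> exists2 u, List.In u (d0 :: ds) & leT R v u.
  move=> u hu hvu; exists u => //.
  by case: hv => [ev|hv0]; [subst v; exact: IH0 u hvu|exact: IH v hv0 u hvu].
set X := f (Node t0 ts); set Y := f (Node d0 ds).
set H := hmax (t0 :: ts); set H' := hmax (d0 :: ds).
case: (In_nth t0 hv) => j hj ej.
have b1 := child_block R_refl t0 ts j; rewrite modn_small // ej in b1.
have b2 := block_in (X_len t0 ts) b1.
have [hh [hhY hhs]] := sle_in_compose R_trans b2 (blk_top _ (X_len t0 ts)) h.
have hup := blk_upper (ocnf hh) (_ : rlt _ [:: H'.+1]).
rewrite mko_val in hup.
have hup' := hup (_ : rlt (proj1_sig hh) [:: H'.+1]).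
have h3 : sle_in R Y (blk H' 0) (blk H' (cntlead H' (proj1_sig hh)).+1) (f v).
  rewrite blk0; apply: sle_in_widen hhs; [exact: ole_refl|apply: olt_ole; apply: hup'].
  by move: hhY; rewrite /olt X_len.
have hne : olt ozero (slen (f v)) by rewrite /olt slen_f.
case: (blocks_L1 R_trans (f_indec R_refl (t := v)) hne h3) => n _ hn.
have h4 := in_block (X_len d0 ds) hn.
have h5 := sle_trans R_trans h4 (block_X_cat R_refl d0 ds n).
case: (cat_L1 R_trans (f_indec R_refl (t := v)) h5) => h6; apply: hv' h6.
  by apply: nth_In; rewrite ltn_mod.
by apply: nth_In; case: (hmax_in (erefl (d0 :: ds))).
Qed.

Lemma emb x y : leT R x y <-> sle R (f x) (f y).
Proof. split; [exact: emb_fwd|exact: emb_bwd]. Qed.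

End Emb.

Lemma EMinf (P : Prop) : {P} + {~ P}.
Proof.
have : exists b : bool, if b then P else ~ P.
  by case: (classic P) => h; [exists true|exists false].
move/constructive_indefinite_description => [[] h]; by [left|right].
Qed.

Definition pb (P : Prop) : bool := if EMinf P then true else false.

Lemma pbP (P : Prop) : pb P -> P.
Proof. by rewrite /pb; case: (EMinf P). Qed.

Lemma pbT (P : Prop) : P -> pb P.
Proof. by rewrite /pb; case: (EMinf P). Qed.

Section Dec.
Variables (Q : Type) (R : Q -> Q -> Prop).
Hypothesis R_refl : forall x, R x x.
Hypothesis R_trans : forall x y z, R x y -> R y z -> R x z.
Variable q0 : Q.

Notation f := (@ftseq Q).

Inductive expr := EP of tree Q | EC of expr & expr | E0.

Fixpoint eval (E : expr) : tseq Q :=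
  match E with
  | EP t => f t
  | EC a b => tcat (eval a) (eval b)
  | E0 => TSeq ozero (fun _ => q0)
  end.

Fixpoint pieces (E : expr) : list (tree Q) :=
  match E with
  | EP t => [:: t]
  | EC a b => List.app (pieces a) (pieces b)
  | E0 => [::]
  end.

Lemma no_lt_zero (s : tseq Q) (g : ord -> ord) : olt ozero (slen s) ->
  (forall i, olt i (slen s) -> olt (g i) ozero) -> False.
Proof. by move=> h hg; move: (hg _ h); rewrite ozero_le. Qed.

Lemma expr_L1 s E : indec R s -> olt ozero (slen s) -> sle R s (eval E) ->
  exists t, List.In t (pieces E) /\ sle R s (f t).
Proof.
move=> hs hne; elim: E => [t|a IHa b IHb|] /= h.
- by exists t; split => //; left.
- case: (cat_L1 R_trans hs h) => h'.
    by case: (IHa h') => t [ht h2]; exists t; split => //; apply: List.in_or_app; left.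
  by case: (IHb h') => t [ht h2]; exists t; split => //; apply: List.in_or_app; right.
- case: h => g [_ hg]; exfalso; apply: (no_lt_zero (g := g) hne) => i hi.
  by case: (hg _ hi).
Qed.

Lemma expr_empty E : (forall t, ~ List.In t (pieces E)) -> slen (eval E) = ozero.
Proof.
elim: E => [t|a IHa b IHb|] //= h.
  by exfalso; apply: (h t); left.
rewrite IHa; last by move=> t ht; apply: (h t); apply: List.in_or_app; left.
rewrite IHb; last by move=> t ht; apply: (h t); apply: List.in_or_app; right.
by apply: ord_inj.
Qed.

Lemma expr_fits c0 chs E : (forall t, List.In t (pieces E) -> List.In t (c0 :: chs)) ->
  forall a, exists2 b, a <= b &
    sle_in R (f (Node c0 chs)) (blk (hmax (c0 :: chs)) a) (blk (hmax (c0 :: chs)) b) (eval E).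
Proof.
elim: E => [t|E1 IH1 E2 IH2|] /= h a.
- exists (size (c0 :: chs) * a + size (c0 :: chs)).
    by apply: leq_trans (leq_addr _ _); rewrite leq_pmull.
  apply: (X_fits R_refl R_trans (h t (or_introl erefl))); exact: sle_refl.
- case: (IH1 (fun t ht => h t (List.in_or_app _ _ _ (or_introl ht))) a) => b1 h1 s1.
  case: (IH2 (fun t ht => h t (List.in_or_app _ _ _ (or_intror ht))) b1) => b2 h2 s2.
  exists b2; first exact: leq_trans h1 h2.
  apply: (cat_in _ _ s1 s2); exact/blk_le.
- exists a => //; exact: sle_in_empty.
Qed.

Fixpoint subs (l : seq (tree Q)) : list (list (tree Q)) :=
  match l with
  | [::] => [:: [::]]
  | x :: l' => List.app (List.map (cons x) (subs l')) (subs l')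
  end.

Lemma filter_subs (p : pred (tree Q)) l : List.In (filter p l) (subs l).
Proof.
elim: l => [|x l IH] /=; first by left.
case: (p x); apply: List.in_or_app; [left; exact: List.in_map|right; exact: IH].
Qed.

Lemma In_filter (p : pred (tree Q)) (t : tree Q) l : List.In t l -> p t -> List.In t (filter p l).
Proof.
elim: l => //= x l IH [ex|h] hp.
  by subst x; rewrite hp; left.
case: (p x); [right|]; exact: IH.
Qed.

Lemma In_filter_inv (p : pred (tree Q)) (t : tree Q) l : List.In t (filter p l) -> p t.
Proof.
elim: l => //= x l IH; case E: (p x) => /=.
  by case=> [<-//|h]; exact: IH.
exact: IH.
Qed.

Definition mkNode (l : seq (tree Q)) : tree Q :=
  if l is t :: ts then Node t ts else Leaf q0.

Fixpoint U (L : list Q) (e : nat) : list (tree Q) :=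
  match e with
  | 0 => List.map (@Leaf Q) L
  | e'.+1 => List.app (U L e') (List.map mkNode (subs (U L e')))
  end.

Lemma U_succ L e t : List.In t (U L e) -> List.In t (U L e.+1).
Proof. move=> h /=; apply: List.in_or_app; by left. Qed.

Lemma lt_single0 (i : ord) : olt i (mko [:: 0]) -> i = ozero.
Proof.
rewrite /olt val_single rlt_single => h; apply: ord_inj.
by move: h; case: (proj1_sig i).
Qed.

Lemma oadd_blk e k (i : ord) : olt i (mko [:: e]) -> oadd (blk e k) i = idx e k i.
Proof.
move=> hi; apply: ord_inj; rewrite /= val_blk val_idx //.
have hi' : rlt (proj1_sig i) [:: e] by move: hi; rewrite /olt val_single.
case: (proj1_sig i) hi' => [|z l] hz; first by rewrite radd0 cats0.
rewrite raddE /pre.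
have zlt : z < e by move: hz; rewrite rlt_single.
rewrite (_ : [seq x <- nseq k e | z <= x] = nseq k e) //.
apply/all_filterP/allP => x; rewrite mem_nseq => /andP[_ /eqP ->]; exact: ltnW.
Qed.

Lemma decomp_pow L e : forall (x : tseq Q), proj1_sig (slen x) = [:: e] ->
  (forall i, olt i (slen x) -> List.In (sval x i) L) ->
  exists E, sle R x (eval E) /\
    forall t, List.In t (pieces E) -> List.In t (U L e) /\ sle R (f t) x.
Proof.
elim: e => [|e IHe] x hx hL.
  have hz : olt ozero (slen x) by rewrite /olt hx.
  exists (EP (Leaf (sval x ozero))); split.
    exists id; split.
      move=> i j hij hj; have ej : j = ozero by apply: lt_single0; move: hj; rewrite /olt hx val_single.
      by move: hij; rewrite ej ozero_le.
    move=> i hi; have ei : i = ozero by apply: lt_single0; move: hi; rewrite /olt hx val_single.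
    by subst i; split => //; rewrite /olt slen_f.
  move=> t [<-|//]; split; first by apply: List.in_map; exact: hL.
  exists id; split.
    move=> i j hij hj; exfalso; move: hij; rewrite (lt_single0 hj) ozero_le //.
  move=> i hi; have ei : i = ozero by apply: lt_single0.
  by subst i; split => //; rewrite /olt hx.
set B := fun n => block x e n.
have hB : forall n, proj1_sig (slen (B n)) = [:: e] by move=> n; exact: val_single.
have hBL : forall n i, olt i (slen (B n)) -> List.In (sval (B n) i) L.
  move=> n i hi; apply: hL; exact: idx_topQ.
have HE : forall n, exists E, sle R (B n) (eval E) /\
    forall t, List.In t (pieces E) -> List.In t (U L e) /\ sle R (f t) (B n).
  move=> n; exact: IHe (hB n) (hBL n).
have HE' : forall n, {E | sle R (B n) (eval E) /\
    forall t, List.In t (pieces E) -> List.In t (U L e) /\ sle R (f t) (B n)}.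
  move=> n; apply: constructive_indefinite_description; exact: HE n.
pose En n := proj1_sig (HE' n).
have hEn : forall n, sle R (B n) (eval (En n)) /\
    forall t, List.In t (pieces (En n)) -> List.In t (U L e) /\ sle R (f t) (B n).
  move=> n; exact: proj2_sig (HE' n).
pose P t := forall N, exists n, N <= n /\ sle R (f t) (B n).
pose ch := filter (fun t => pb (P t)) (U L e).
have [N0 hN0] : exists N0, forall t, List.In t (U L e) ->
    P t \/ forall n, N0 <= n -> ~ sle R (f t) (B n).
  elim: (U L e) => [|t l [N1 hN1]]; first by exists 0.
  case: (classic (P t)) => hp.
    exists N1 => u [<-|hu]; [by left|exact: hN1].
  move: hp => /not_all_ex_not [N hN].
  exists (maxn N N1) => u [<-|hu].
    right => n hn hs; apply: hN; exists n; split => //; exact: leq_trans (leq_maxl _ _) hn.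
  case: (hN1 _ hu) => [h|h]; [by left|right => n hn; apply: h; exact: leq_trans (leq_maxr _ _) hn].
have hch : forall n, N0 <= n -> forall t, List.In t (pieces (En n)) -> List.In t ch.
  move=> n hn t ht; case: (hEn n) => _ /(_ _ ht) [hU hs].
  apply: In_filter => //; apply: pbT.
  by case: (hN0 _ hU) => // /(_ _ hn).
have chP : forall t, List.In t ch -> P t.
  move=> t ht; apply: pbP; exact: (In_filter_inv ht).
case Ech: ch hch chP => [|c0 chs] hch chP.
  exfalso; case: (hEn N0) => hs _.
  have := expr_empty (E := En N0) (fun t ht => hch _ (leqnn _) t ht).
  case: hs => g [_ hg] ez.
  apply: (no_lt_zero (s := B N0) (g := g)); first by rewrite /olt hB.
  move=> i hi; case: (hg _ hi); by rewrite ez.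
set T := Node c0 chs.
set H := hmax (c0 :: chs).
have C1 : sle R (f T) x.
  have Hb : forall n a, exists b, sle_in R x (blk e a) (blk e b) (block (f T) H n).
    move=> n a.
    have hc1 : List.In (nth c0 (c0 :: chs) (n %% size (c0 :: chs))) (c0 :: chs).
      by apply: nth_In; rewrite ltn_mod.
    have hc2 : List.In (nth c0 (c0 :: chs) (index H (map (@ht Q) (c0 :: chs)))) (c0 :: chs).
      by apply: nth_In; case: (hmax_in (erefl (c0 :: chs))).
    case: (chP _ hc1 a) => n1 [hn1 s1].
    case: (chP _ hc2 n1.+1) => n2 [hn2 s2].
    exists n2.+1.
    apply: (sle_in_comp R_trans (block_X_cat R_refl c0 chs n)).
    have e1 := block_in hx s1; have e2 := block_in hx s2.
    apply: (cat_in (mid := blk e n1.+1)).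
    - apply/blk_le; lia.
    - apply/blk_le; lia.
    - apply: sle_in_widen e1; [apply/blk_le; lia|exact: ole_refl].
    - apply: sle_in_widen e2; [apply/blk_le; lia|exact: ole_refl].
  have [g hg] := omega_sum (X_len c0 chs) hx Hb 0.
  exact: (@sle_in_sle _ _ _ _ _ _ (ex_intro _ g hg)).
pose Pre := fix Pre k := if k is k'.+1 then EC (Pre k') (En k') else E0.
have hPre : forall k, sle R (TSeq (blk e k) (sval x)) (eval (Pre k)).
  elim=> [|k IH].
    exists id; split; first by move=> i j _ /=; rewrite blk0 ozero_le.
    by move=> i /=; rewrite blk0 ozero_le.
  have hle : ole (blk e k) (slen (TSeq (blk e k.+1) (sval x))) by apply/blk_le.
  apply: (sle_trans R_trans (split_le R_refl hle)) => /=.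
  apply: cat_mono => //.
  apply: (sle_trans R_trans _ (proj1 (hEn k))).
  have hlen : proj1_sig (osub (blk e k.+1) (blk e k)) = [:: e].
    by rewrite /= !val_blk; elim: k {IH hle} => //= k ->; rewrite eqxx.
  exists id; split => // i hi.
  have hi' : olt i (mko [:: e]) by move: hi; rewrite /olt /= val_single -hlen.
  split => //=; rewrite oadd_blk //; exact: R_refl.
have C2 : sle R (tail x (blk e N0)) (f T).
  have hxt := tail_blk_len N0 hx.
  have Hb : forall n a, exists b, sle_in R (f T) (blk H a) (blk H b) (block (tail x (blk e N0)) e n).
    move=> n a.
    have s1 := tail_block R_refl N0 n hx.
    have s2 := proj1 (hEn (N0 + n)).
    have hp : forall t, List.In t (pieces (En (N0 + n))) -> List.In t (c0 :: chs).
      move=> t ht; apply: hch ht; exact: leq_addr.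
    case: (expr_fits hp a) => b _ hb; exists b.
    exact: (sle_in_comp R_trans (sle_trans R_trans s1 s2) hb).
  have [g hg] := omega_sum hxt (X_len c0 chs) Hb 0.
  exact: (@sle_in_sle _ _ _ _ _ _ (ex_intro _ g hg)).
have hPreIn : forall k t, List.In t (pieces (Pre k)) -> exists2 k', k' < k & List.In t (pieces (En k')).
  elim=> [|k IH] t; first by [].
  move=> h; have [h1|h1] := List.in_app_or _ _ _ h.
    by case: (IH _ h1) => k' hk' h'; exists k' => //; exact: ltnW.
  by exists k.
exists (EC (Pre N0) (EP T)); split.
  apply: (sle_trans R_trans (split_le R_refl (olt_ole (blk_top N0 hx)))).
  apply: cat_mono; [exact: hPre|exact: C2].
move=> t /= h; have [ht|[<-|//]] := List.in_app_or _ _ _ h.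
  case: (hPreIn _ _ ht) => k' _ hk'; case: (hEn k') => _ /(_ _ hk') [hU hs].
  split; first exact: U_succ.
  exact: (sle_trans R_trans hs (block_le R_refl k' hx)).
split => //; apply: List.in_or_app; right.
have := List.in_map mkNode _ _ (filter_subs (fun t => pb (P t)) (U L e)).
by rewrite -/ch Ech.
Qed.

End Dec.

Section Fin.
Variables (Q : Type) (R : Q -> Q -> Prop).
Hypothesis R_refl : forall x, R x x.
Hypothesis R_trans : forall x y z, R x y -> R y z -> R x z.
Variable q0 : Q.

Notation f := (@ftseq Q).

Lemma decomp L (a : seq nat) : forall (x : tseq Q), proj1_sig (slen x) = a ->
  (forall i, olt i (slen x) -> List.In (sval x i) L) ->
  exists E, sle R x (eval q0 E) /\ forall t, List.In t (pieces E) -> sle R (f t) x.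
Proof.
elim: a => [|e a IH] x hx hL.
  exists (E0 Q); split => //.
  exists id; split; first by move=> i j _; rewrite /olt hx rlt_nil.
  by move=> i; rewrite /olt hx rlt_nil.
set d := mko [:: e].
have hd : ole d (slen x).
  by rewrite /ole /olt hx val_single rlt_single ltnn.
have h1 : proj1_sig (slen (TSeq d (sval x))) = [:: e] by exact: val_single.
have hL1 : forall i, olt i (slen (TSeq d (sval x))) -> List.In (sval (TSeq d (sval x)) i) L.
  move=> i hi; apply: hL; exact: olt_le_trans hi hd.
have h2 : proj1_sig (slen (tail x d)) = a.
  change (rsub (proj1_sig (slen x)) (proj1_sig d) = a); rewrite hx val_single /=.
  by rewrite eqxx; case: (a).
have hL2 : forall i, olt i (slen (tail x d)) -> List.In (sval (tail x d) i) L.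
  move=> i hi; apply: hL => /=; rewrite -(oaddK' hd); exact: oadd_mono.
case: (decomp_pow R_refl R_trans q0 h1 hL1) => E1 [s1 p1].
case: (IH _ h2 hL2) => E2 [s2 p2].
exists (EC E1 E2); split.
  apply: (sle_trans R_trans (split_le R_refl hd)); exact: cat_mono.
move=> t /= h; have [ht|ht] := List.in_app_or _ _ _ h.
  case: (p1 _ ht) => _ hs; exact: (sle_trans R_trans hs (prefix_le R_refl hd)).
exact: (sle_trans R_trans (p2 _ ht) (tail_sle R_refl hd)).
Qed.

Lemma esurj (s : iF R) : exists t, sle R (proj1_sig s) (f t) /\ sle R (f t) (proj1_sig s).
Proof.
case: s => s [hne [[L hL] hind]] /=.
case: (decomp (erefl _) hL) => E [hs hp].
have hne' : olt ozero (slen s) by apply: ozero_lt.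
case: (expr_L1 R_trans hind hne' hs) => t [ht hst].
exists t; split => //; exact: hp.
Qed.

End Fin.

Unset Implicit Arguments.

Theorem theorem4p26 (Q : Type) (R : Q -> Q -> Prop)
  (R_refl : forall x, R x x)
  (R_trans : forall x y z, R x y -> R y z -> R x z)
  (Q_nonempty : inhabited Q) :
  exists (f : tree Q -> iF R) (g : iF R -> tree Q),
    (forall x y, leT R x y <-> sleF R (f x) (f y)) /\
    (forall x y, sleF R x y <-> leT R (g x) (g y)) /\
    (forall t, leT R (g (f t)) t /\ leT R t (g (f t))) /\
    (forall s, sleF R (f (g s)) s /\ sleF R s (f (g s))).
Proof.
case: Q_nonempty => q0.
pose f (t : tree Q) : iF R := exist _ (ftseq t) (f_iF R_refl t).
have H1 : forall s : iF R, {t | sle R (proj1_sig s) (ftseq t) /\ sle R (ftseq t) (proj1_sig s)}.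
  move=> s; apply: constructive_indefinite_description; exact: esurj R_refl R_trans q0 s.
pose g (s : iF R) := proj1_sig (H1 s).
have hg : forall s, sle R (proj1_sig s) (ftseq (g s)) /\ sle R (ftseq (g s)) (proj1_sig s).
  move=> s; exact: proj2_sig (H1 s).
have hf : forall x y, leT R x y <-> sleF R (f x) (f y).
  move=> x y; rewrite /sleF /=; exact: emb.
exists f, g; split; first exact: hf.
split.
  move=> x y; rewrite emb // /sleF; split => h.
    case: (hg x) => _ a; case: (hg y) => b _.
    exact: (sle_trans R_trans a (sle_trans R_trans h b)).
  case: (hg x) => a _; case: (hg y) => _ b.
  exact: (sle_trans R_trans a (sle_trans R_trans h b)).
split.
  move=> t; rewrite !hf /sleF /=; case: (hg (f t)) => a b; by split.
move=> s; rewrite /sleF /=; case: (hg s) => a b; by split.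
Qed.
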